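(* Let $K$ be a field, $\Lambda=\mathrm{diag}(a_1,\dots,a_n)$, $P=(p_{st})\in GL_n(K)$, $A=P^{-1}\Lambda P$, and $B=\mathrm{diag}(b_1,\dots,b_n)$, with all $a_i,b_i\in K$. Then $$T(A,B)=(-1)^{\lfloor n/2\rfloor}\,\delta(a_1,\dots,a_n)^n\,\delta(b_1,\dots,b_n)^n\,\frac{1}{(\det P)^n}\prod_{s=1}^n\prod_{t=1}^n p_{st}.$$
   Context: $M(A,B)\in M_{n^2}(K)$ is the block matrix of $n\times n$ blocks whose $(i,j)$-th block is $A^{j-1}B^{i-1}$ ($i,j=1,\dots,n$), and $T(A,B)=\det M(A,B)$. $\delta(x_1,\dots,x_n)=\prod_{s<t}(x_t-x_s)$. *)

(* Defs.v *)
From HB Require Import structures.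
From mathcomp Require Import all_boot all_order all_algebra.
Set Implicit Arguments. Unset Strict Implicit. Unset Printing Implicit Defensive.
Import Order.TTheory GRing.Theory Num.Theory.
Local Open Scope ring_scope.

(* Index r : 'I_(n*n) encodes the pair (r %/ n, r %% n): block index r %/ n,
   position inside the block r %% n (0-based). *)
Lemma blk_div_lt (n : nat) (r : 'I_(n * n)) : (r %/ n < n)%N.
Proof.
case: n r => [|n] r; first by case: r.
by rewrite ltn_divLR // ltn_ord.
Qed.

Lemma blk_mod_lt (n : nat) (r : 'I_(n * n)) : (r %% n < n)%N.
Proof.
case: n r => [|n] r; first by case: r.
by rewrite ltn_pmod.
Qed.

Definition blk (n : nat) (r : 'I_(n * n)) : 'I_n := Ordinal (blk_div_lt r).
Definition pos (n : nat) (r : 'I_(n * n)) : 'I_n := Ordinal (blk_mod_lt r).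

(* M(A,B): the n x n block matrix whose (i,j)-th block (1-based) is A^(j-1) B^(i-1);
   0-based: block (i,j) is A^j B^i. *)
Definition Mblock (K : fieldType) (n : nat) (A B : 'M[K]_n) : 'M[K]_(n * n) :=
  \matrix_(r, c) (A ^+ blk c *m B ^+ blk r) (pos r) (pos c).

Definition T (K : fieldType) (n : nat) (A B : 'M[K]_n) : K := \det (Mblock A B).

Definition delta (K : fieldType) (n : nat) (x : 'I_n -> K) : K :=
  \prod_(s < n) \prod_(t < n | (s < t)%N) (x t - x s).

(* Main.v *)
Require Import Defs.
From HB Require Import structures.
From mathcomp Require Import all_boot all_order all_algebra all_fingroup.
From mathcomp.real_closed Require Import mxtens.
From mathcomp Require Import ring.
Import GRing.Theory.
Local Open Scope ring_scope.

Lemma big_tens (R : Type) (idx : R) (op : Monoid.com_law idx) n (F : 'I_(n * n) -> R) :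
  \big[op/idx]_(r < n * n) F r =
  \big[op/idx]_(i < n) \big[op/idx]_(j < n) F (mxtens_index (i, j)).
Proof.
rewrite pair_big /=.
rewrite (reindex (@mxtens_index n n)) /=; last first.
  by exists (@mxtens_unindex n n) => x _; rewrite (mxtens_indexK, mxtens_unindexK).
by apply: eq_bigr => -[i j].
Qed.

Lemma det_castmx (R : comPzRingType) m m' (e : m = m') (A : 'M[R]_m) :
  \det (castmx (e, e) A) = \det A.
Proof. by case: m' / e; rewrite castmx_id. Qed.

Lemma det_tens1 (R : comPzRingType) m n (B : 'M[R]_n) :
  \det ((1%:M : 'M[R]_m) *t B) = \det B ^+ m.
Proof.
elim: m => [|m IH]; first by rewrite det_mx00 expr0.
have -> : (1%:M : 'M[R]_m.+1) = block_mx (1%:M : 'M_1) 0 0 (1%:M : 'M_m).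
  exact: (@scalar_mx_block R 1 m).
rewrite tens_block_mx !tens0mx.
have E : (esym (mulnDl 1 m n)) = (esym (mulnDl 1 m n)) by [].
rewrite det_castmx det_ublock IH exprS; congr (_ * _).
have -> : (1%:M : 'M[R]_1) = 1 by [].
by rewrite tens_scalar1mx det_castmx.
Qed.

Lemma prod_tperm_inv (T : finType) (f : T -> T) (S : seq T) :
  uniq (S ++ map f S) -> (forall x, x \in S -> f (f x) = x) ->
  forall y, (\prod_(x <- S) tperm x (f x))%g y =
            if (y \in S) || (y \in map f S) then f y else y.
Proof.
elim: S => [|a S IH] U H y; first by rewrite big_nil perm1.
have H' : forall x, x \in S -> f (f x) = x by move=> x xS; apply: H; rewrite inE xS orbT.
move: U; rewrite cat_uniq /= !inE => /and4P [/andP [aS uS] hasF0 faN uF].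
move: hasF0; rewrite !negb_or => /andP [/andP [faa0 faS0] hasF0].
have hasF : ~~ has (mem S) (map f S).
  apply/hasPn => x xm; have := hasPn hasF0 x xm; rewrite inE negb_or.
  by case/andP.
have faaS : ~~ ((f a == a) || (f a \in S)) by rewrite negb_or faa0.
have U' : uniq (S ++ map f S) by rewrite cat_uniq uS uF hasF.
rewrite big_cons permM IH //.
have faS : f a \notin S by [].
case: (tpermP a (f a) y) => [->|->|ya yfa].
- by rewrite (negbTE faS) (negbTE faN) eqxx.
- rewrite (negbTE aS) /=.
  have -> : (a \in map f S) = false.
    apply/negP => am; have := hasPn hasF0 a am.
    by rewrite inE eqxx.
  by rewrite eqxx orbT H // inE eqxx.
- by move/eqP/negbTE: ya => ->; move/eqP/negbTE: yfa => ->.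
Qed.

Definition swf n (r : 'I_(n * n)) : 'I_(n * n) :=
  @mxtens_index n n ((@mxtens_unindex n n r).2, (@mxtens_unindex n n r).1).

Arguments swf {n}.

Lemma swfE n i j : swf (@mxtens_index n n (i, j)) = @mxtens_index n n (j, i).
Proof. by rewrite /swf mxtens_indexK. Qed.

Lemma swfK n : involutive (@swf n).
Proof. by move=> r; rewrite /swf mxtens_indexK /= mxtens_unindexK. Qed.

Definition sw n : 'S_(n * n) := perm (can_inj (@swfK n)).

Lemma swE n r : sw n r = swf r.
Proof. by rewrite permE. Qed.

Lemma sumS n : (\sum_(i < n.+1) (n.+1 - i.+1) = n + \sum_(i < n) (n - i.+1))%N.
Proof. by rewrite big_ord_recl subn1 /=; congr (_ + _). Qed.

Lemma odd_sum n : odd (\sum_(i < n) (n - i.+1))%N = odd n./2.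
Proof.
suff : odd (\sum_(i < n) (n - i.+1))%N = odd n./2 /\
       odd (\sum_(i < n.+1) (n.+1 - i.+1))%N = odd n.+1./2 by case.
elim: n => [|n [IH1 IH2]]; first by rewrite !big_ord0 big_ord1.
split => //.
rewrite sumS sumS oddD oddD IH1 /=.
by case: (odd n); case: (odd n./2).
Qed.

Lemma inner_count n (i : 'I_n) :
  (\sum_(j < n) (i < j : nat))%N = (n - i.+1)%N.
Proof.
rewrite -(big_mkord xpredT (fun j => (i < j : nat))).
rewrite (big_cat_nat (n := i.+1)) //= ?ltn_ord //.
rewrite big1_seq; last by move=> j; rewrite mem_index_iota ltnNge => /andP [_ /negbTE ->].
rewrite add0n (eq_big_seq (fun _ => 1%N)); last by move=> j; rewrite mem_index_iota => /andP [-> _].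
by rewrite sum_nat_const_nat muln1.
Qed.

Lemma odd_sw n : odd_perm (sw n) = odd n./2.
Proof.
pose un := @mxtens_unindex n n.
pose S := [seq r <- enum 'I_(n * n) | ((un r).1 < (un r).2)%N].
have memS r : (r \in S) = ((un r).1 < (un r).2)%N by rewrite mem_filter mem_enum andbT.
have unsw r : un (swf r) = ((un r).2, (un r).1) by rewrite /swf /un mxtens_indexK.
have U : uniq (S ++ map (@swf n) S).
  have uS : uniq S by rewrite filter_uniq // enum_uniq.
  rewrite cat_uniq uS (map_inj_uniq (can_inj (@swfK n))) // uS andbT /=.
  apply/hasPn => x /mapP [y yS ->]; rewrite memS unsw /=.
  by move: yS; rewrite memS => /ltnW; rewrite leqNgt.
have E : sw n = (\prod_(x <- S) tperm x (swf x))%g.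
  apply/permP => y; rewrite prod_tperm_inv //; last by move=> x _; rewrite swfK.
  rewrite swE; case: ifP => // /negbT; rewrite negb_or memS; case/andP => h1 h2.
  apply: (can_inj (@mxtens_unindexK n n)); rewrite -/un unsw.
  have : ((un y).2 == (un y).1 :> nat).
    rewrite eqn_leq leqNgt h1 /= leqNgt; apply/negP => lt.
    case/negP: h2; rewrite -(@swfK n y); apply: map_f; by rewrite memS unsw.
  by case: (un y) => a b /= /eqP/val_inj ->.
rewrite E -(big_map (fun x => (x, swf x)) xpredT (fun t => tperm t.1 t.2)).
rewrite odd_perm_prod; last first.
  apply/allP => t /mapP [x xS ->] /=; rewrite /dpair /=.
  apply/eqP => ex; move: xS; rewrite memS.
  move=> lt; have e : (un x).1 = (un (swf x)).1 by rewrite -ex.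
  rewrite unsw in e.
  by move: lt; rewrite e /= ltnn.
rewrite size_map size_filter -odd_sum.
congr odd.
rewrite -sum1_count big_mkcond /= big_enum /=.
rewrite (@big_tens nat 0%N addn); apply: eq_bigr => i _; rewrite -inner_count.
apply: eq_bigr => j _.
have /(congr1 (fun p => (val p.1, val p.2))) /= [-> ->] := @mxtens_indexK n n (i, j).
by case: (i < j)%N.
Qed.


Lemma diag_pow (R : comPzRingType) n (d : 'rV[R]_n) j :
  diag_mx d ^+ j = diag_mx (\row_i d 0 i ^+ j).
Proof.
elim: j => [|j IH].
  by apply/matrixP => i k; rewrite !mxE expr0.
rewrite exprS IH -mulmxE mul_diag_mx; apply/matrixP => i k; rewrite !mxE.
by rewrite mulrnAr exprS.
Qed.

Lemma powA (K : fieldType) n (P L : 'M[K]_n) j : P \in unitmx ->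
  (invmx P *m L *m P) ^+ j = invmx P *m L ^+ j *m P.
Proof.
move=> hP; elim: j => [|j IH].
  by rewrite !expr0 mulmx1 mulVmx.
by rewrite exprS IH -!mulmxE !mulmxA mulmxK // exprS -mulmxE !mulmxA.
Qed.

Lemma blkE n (r : 'I_(n * n)) : blk r = (@mxtens_unindex n n r).1.
Proof. by apply: val_inj. Qed.
Lemma posE n (r : 'I_(n * n)) : pos r = (@mxtens_unindex n n r).2.
Proof. by apply: val_inj. Qed.

Lemma tens_swap (R : comPzRingType) n (A : 'M[R]_n) :
  \det (A *t (1%:M : 'M_n)) = \det ((1%:M : 'M_n) *t A).
Proof.
have -> : A *t (1%:M : 'M_n) = row_perm (sw n) (col_perm (sw n) ((1%:M : 'M_n) *t A)).
  apply/matrixP => r c.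
  case: (mxtens_indexP r) => i p; case: (mxtens_indexP c) => j q.
  by rewrite !mxE !swE !swfE !mxtens_indexK /= mulrC.
rewrite row_permE col_permE !det_mulmx !det_perm odd_permV.
by rewrite mulrCA -exprD -signr_odd oddD addbb expr0 mulr1.
Qed.

Lemma det_vdm (K : fieldType) n (a : 'I_n -> K) :
  \det (Vandermonde n (\row_i a i)) = delta a.
Proof.
rewrite det_Vandermonde /delta; apply: eq_bigr => i _; apply: eq_bigr => j _.
by rewrite !mxE.
Qed.

Theorem mainTheorem5 (K : fieldType) (n : nat) (a b : 'I_n -> K) (P : 'M[K]_n) :
  P \in unitmx ->
  T (invmx P *m diag_mx (\row_i a i) *m P) (diag_mx (\row_i b i)) =
  (-1) ^+ (n./2) * delta a ^+ n * delta b ^+ n * ((\det P) ^+ n)^-1 *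
  \prod_(s < n) \prod_(t < n) P s t.
Proof.
move=> hP.
pose Q := invmx P.
pose Z := Vandermonde n (\row_i b i).
pose W := (Vandermonde n (\row_i a i))^T.
pose X := Z *t Q.
pose D := diag_mx (\row_r P (@mxtens_unindex n n r).1 (@mxtens_unindex n n r).2).
have EM : Mblock (invmx P *m diag_mx (\row_i a i) *m P) (diag_mx (\row_i b i)) =
   col_perm (sw n) X *m D *m (W *t (1%:M : 'M_n)).
  apply/matrixP => r c.
  case: (mxtens_indexP r) => i p; case: (mxtens_indexP c) => j q.
  rewrite mxE !blkE !posE !mxtens_indexK /= powA // !diag_pow mul_mx_diag mxE.
  rewrite [in RHS]mxE (@big_tens K 0 +%R).
  rewrite mul_mx_diag [in LHS]mxE mulr_suml; apply: eq_bigr => k _.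
  rewrite (bigD1 q) //= big1 ?addr0; last first.
    by move=> qq nq; rewrite !mxE !mxtens_indexK /= (negbTE nq) !mulr0.
  rewrite /D mul_mx_diag !mxE !swE !swfE !mxtens_indexK /= eqxx mulr1.
  by rewrite /Q; ring.
have ED : \det D = \prod_(s < n) \prod_(t < n) P s t.
  rewrite /D det_diag (@big_tens K 1 *%R); apply: eq_bigr => s _; apply: eq_bigr => t _.
  by rewrite mxE mxtens_indexK.
rewrite /T EM !det_mulmx col_permE det_mulmx det_perm odd_permV odd_sw signr_odd ED.
rewrite /X tensmx_decr det_mulmx tens_swap !det_tens1 tens_swap det_tens1.
rewrite /W det_tr !det_vdm /Q det_inv exprVn.
ring.
Qed.
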